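(* Let $m\ge3$ be odd, let $s$ be an even positive integer not divisible by $4$, $n=sm$, and $\Gamma=C_n[mK_1]$. Define $$\eta_1=(t,t,\dots,t)r,\qquad \eta_2=(\gamma_1,\gamma_2,\dots,\gamma_n)z,\qquad H=\langle\eta_1,\eta_2\rangle,$$ where $\gamma_{2i+1}=\gamma_{2i+2}=tc^{i}$ for $0\le i<n/2$ (so $\eta_2=(t,t,tc,tc,tc^2,tc^2,\dots,tc^{-1},tc^{-1})z$). Then $\eta_1$ has order $n$, $\eta_2$ has order $2m$, $\eta_1\eta_2$ has order $2$, and $|H|=2m^2n$.
   Context: $C_n[mK_1]$ is the graph with vertex set $\{1,\dots,n\}\times\{1,\dots,m\}$ in which $(i_1,j_1)$ is adjacent to $(i_2,j_2)$ if and only if $i_1\equiv i_2\pm1\pmod n$ (residues mod $n$ taken in $\{1,\dots,n\}$). Permutations act on the right ($x\alpha$ is the image of $x$) and products are composed left to right, both in $S_m$ and in $\mathrm{Aut}(\Gamma)$. For $\alpha_1,\dots,\alpha_n\in S_m$ and a permutation $x$ of $\{1,\dots,n\}$ in the dihedral group $D_n=\langle r,z\rangle$, $(\alpha_1,\dots,\alpha_n)x$ denotes the automorphism of $\Gamma$ mapping $(i,j)\mapsto(ix,\,j\alpha_i)$; $1$ denotes an identity permutation. Here $c=(1\,2\,\cdots\,m)\in S_m$; $t\in S_m$ fixes $1$ and maps $j\mapsto m-j+2$ for $2\le j\le m$; $r$ is the permutation $i\mapsto i+1 \pmod n$ of $\{1,\dots,n\}$; and $z$ fixes $1$ and maps $j\mapsto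 n-j+2$ for $2\le j\le n$. *)

(* Defs.v *)
(* Vertices of C_n[mK_1] are encoded 0-indexed as 'I_n * 'I_m:
   the paper's vertex (i,j) is (i-1, j-1). *)
From mathcomp Require Import all_boot all_order all_fingroup.
From mathcomp Require Import zify.
Set Implicit Arguments. Unset Strict Implicit. Unset Printing Implicit Defensive.

Definition cadj (n m : nat) (u v : 'I_n * 'I_m) : bool :=
  (v.1 == ordS u.1) || (u.1 == ordS v.1).

(* j |-> (k - j) mod k, 0-indexed; this is t on {1..m} and z on {1..n}. *)
Fact modneg_subproof k (j : 'I_k) : (k - j) %% k < k.
Proof. by apply: ltn_pmod; apply: leq_ltn_trans (ltn_ord j). Qed.
Definition modneg k (j : 'I_k) : 'I_k := Ordinal (modneg_subproof j).

Lemma modnegK k : involutive (@modneg k).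
Proof.
move=> j; apply: val_inj => /=; have := ltn_ord j.
case: (posnP j) => [-> | jp] jk.
  by rewrite subn0 modnn subn0 modnn.
by rewrite (modn_small (_ : k - j < k)) ?subKn ?modn_small //; lia.
Qed.

Lemma modneg_inj k : injective (@modneg k).
Proof. exact: inv_inj (@modnegK k). Qed.

Definition cperm m : {perm 'I_m} := perm (@ordS_inj m).
Definition tperm' m : {perm 'I_m} := perm (@modneg_inj m).
Definition rperm n : {perm 'I_n} := perm (@ordS_inj n).
Definition zperm n : {perm 'I_n} := perm (@modneg_inj n).

Definition wr_fun n m (a : 'I_n -> {perm 'I_m}) (x : {perm 'I_n})
  (v : 'I_n * 'I_m) : 'I_n * 'I_m := (x v.1, a v.1 v.2).

Lemma wr_fun_inj n m a x : injective (@wr_fun n m a x).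
Proof.
move=> [i j] [i' j'] [] /perm_inj eii; subst i' => /perm_inj -> //.
Qed.

Definition wr n m a x : {perm 'I_n * 'I_m} := perm (@wr_fun_inj n m a x).

Definition eta1 n m : {perm 'I_n * 'I_m} := wr (fun _ => tperm' m) (rperm n).

(* eta_2 = (gamma_1,...,gamma_n) z with gamma_{2i+1} = gamma_{2i+2} = t c^i;
   0-indexed position k carries t c^(k %/ 2).  Products in {perm _} compose
   left to right, as in the paper. *)
Definition eta2 n m : {perm 'I_n * 'I_m} :=
  wr (fun k : 'I_n => (tperm' m * cperm m ^+ (k %/ 2))%g) (zperm n).

(* Main.v *)
Set Warnings "-all".
Require Import Defs.
From mathcomp Require Import all_boot all_order all_fingroup all_algebra.
From mathcomp Require Import cyclic ring zify.
Set Implicit Arguments. Unset Strict Implicit. Unset Printing Implicit Defensive.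
Import GRing.Theory.

Local Open Scope ring_scope.

Lemma ZpE p (k : nat) : val (k%:R : 'I_p.+2) = (k %% p.+2)%N.
Proof. by have := @val_Zp_nat p.+2 isT k. Qed.

Lemma natr0_Zp p (k : nat) : (p.+2 %| k)%N -> (k%:R : 'I_p.+2) = 0.
Proof. by move=> h; apply: val_inj; rewrite ZpE /=; apply/eqP. Qed.

Lemma natr_ord p (x : 'I_p.+2) : (val x)%:R = x.
Proof. by apply: val_inj; rewrite ZpE modn_small ?ltn_ord. Qed.

Lemma ordS_Zp p (j : 'I_p.+2) : ordS j = j + 1.
Proof. by apply: val_inj; rewrite /= [(1 %% _)%N]modn_small // addn1. Qed.

Lemma modneg_Zp p (j : 'I_p.+2) : modneg j = - j.
Proof. by apply: val_inj => /=. Qed.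

Lemma cpermX p k (j : 'I_p.+2) : (cperm p.+2 ^+ k)%g j = j + k%:R.
Proof.
elim: k => [|k IH]; first by rewrite expg0 perm1 addr0.
by rewrite expgSr permM IH /cperm permE ordS_Zp mulrSr addrA.
Qed.

Lemma natr_mod p (N k : nat) : (p.+2 %| N)%N -> ((k %% N)%:R : 'I_p.+2) = k%:R.
Proof. by move=> h; apply: val_inj; rewrite !ZpE modn_dvdm. Qed.

Definition iota p q (i : 'I_q.+2) : 'I_p.+2 := (val i)%:R.
Definition gg p q (i : 'I_q.+2) : 'I_p.+2 := ((val i) %/ 2)%:R.

Lemma val1 q : val (1 : 'I_q.+2) = 1%N.
Proof. by rewrite /= modn_small. Qed.

Lemma valD q (x y : 'I_q.+2) : val (x + y) = ((val x + val y) %% q.+2)%N.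
Proof. by []. Qed.

Lemma valN q (x : 'I_q.+2) : val (- x) = ((q.+2 - val x) %% q.+2)%N.
Proof. by []. Qed.

Lemma iota0 p q : iota p (0 : 'I_q.+2) = 0.
Proof. by []. Qed.

Lemma iota1 p q : iota p (1 : 'I_q.+2) = 1.
Proof. by rewrite /iota val1. Qed.

Lemma iotaD p q (x y : 'I_q.+2) : (p.+2 %| q.+2)%N -> iota p (x + y) = iota p x + iota p y.
Proof. by move=> h; rewrite /iota valD natr_mod // natrD. Qed.

Lemma iotaN p q (x : 'I_q.+2) : (p.+2 %| q.+2)%N -> iota p (- x) = - iota p x.
Proof.
move=> h; rewrite /iota valN natr_mod // natrB; last exact: ltnW (ltn_ord x).
by rewrite (@natr0_Zp p q.+2 h) sub0r.
Qed.

Lemma ggS p q (y : 'I_q.+2) : (p.+2 %| q.+2 %/ 2)%N -> (2 %| q.+2)%N ->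
  gg p (y + 1) + gg p y = iota p (y + 1) - 1.
Proof.
move=> hd he; rewrite /gg /iota valD val1.
have yl : (val y < q.+2)%N := ltn_ord y.
case: (ltnP (val y).+1 q.+2) => hy.
  rewrite modn_small ?addn1 //.
  rewrite -natrD (_ : ((val y).+1 %/ 2 + val y %/ 2 = val y)%N); last by lia.
  by rewrite mulrSr addrK.
have ey : (val y).+1 = q.+2 by lia.
rewrite addn1 ey modnn add0r sub0r.
apply/eqP; rewrite -addr_eq0 -[1]/(1%:R) -natrD natr0_Zp //.
by rewrite (_ : (val y %/ 2 + 1 = q.+2 %/ 2)%N) //; lia.
Qed.

Lemma ggN p q (x : 'I_q.+2) : (p.+2 %| q.+2 %/ 2)%N -> (2 %| q.+2)%N ->
  gg p (- x) = gg p x - iota p x.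
Proof.
move=> hd he; rewrite /gg /iota valN.
have xl : (val x < q.+2)%N := ltn_ord x.
case: (posnP (val x)) => hx.
  by rewrite hx subn0 modnn div0n subrr.
rewrite modn_small; last by lia.
apply: (addIr ((val x)%:R)); rewrite subrK -natrD.
rewrite (_ : ((q.+2 - val x) %/ 2 + val x = q.+2 %/ 2 + val x %/ 2)%N); last by lia.
by rewrite natrD (natr0_Zp hd) add0r.
Qed.

Local Notation V p q := ('I_q.+2 * 'I_p.+2)%type.

Lemma eta1E p q (v : V p q) : eta1 q.+2 p.+2 v = (v.1 + 1, - v.2).
Proof. by rewrite /eta1 /wr permE /wr_fun /rperm /tperm' !permE ordS_Zp modneg_Zp. Qed.

Lemma eta2E p q (v : V p q) : eta2 q.+2 p.+2 v = (- v.1, gg p v.1 - v.2).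
Proof.
rewrite /eta2 /wr permE /wr_fun /zperm permE modneg_Zp permM /tperm' permE.
by rewrite modneg_Zp cpermX addrC.
Qed.

Definition Tfun p q (a b : 'I_p.+2) (v : V p q) : V p q :=
  (v.1, v.2 + (a + b * iota p v.1)).

Lemma Tfun_inj p q a b : injective (@Tfun p q a b).
Proof.
move=> [i j] [i2 j2] h; have /= h1 := congr1 fst h; have /= h2 := congr1 snd h.
by subst i2; rewrite (addIr _ h2).
Qed.

Definition Tp p q a b : {perm V p q} := perm (@Tfun_inj p q a b).
Arguments Tp {p q}.

Lemma TpE p q (a b : 'I_p.+2) (v : V p q) : Tp a b v = (v.1, v.2 + (a + b * iota p v.1)).
Proof. by rewrite permE. Qed.

Lemma pairE (A B : Type) (x y : A * B) : x.1 = y.1 -> x.2 = y.2 -> x = y.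
Proof. by case: x y => ? ? [? ?] /= -> ->. Qed.

Lemma TpM p q (a b c d : 'I_p.+2) : (Tp a b * Tp c d = Tp (p := p) (q := q) (a + c) (b + d))%g.
Proof. apply/permP => v; rewrite permM !TpE /=; congr (_, _); ring. Qed.

Lemma Tp0 p q : Tp (p := p) (q := q) 0 0 = 1%g.
Proof. by apply/permP => v; rewrite TpE perm1 mul0r !addr0; case: v. Qed.

Lemma TpX p q (a b : 'I_p.+2) k : (Tp a b ^+ k = Tp (p := p) (q := q) (a *+ k) (b *+ k))%g.
Proof.
elim: k => [|k IH]; first by rewrite expg0 !mulr0n Tp0.
by rewrite expgSr IH TpM -!mulrSr.
Qed.

Local Notation e1 p q := (eta1 q.+2 p.+2).
Local Notation e2 p q := (eta2 q.+2 p.+2).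

Lemma e1X p q k (v : V p q) : ((e1 p q) ^+ k)%g v = (v.1 + k%:R, (-1) ^+ k * v.2).
Proof.
elim: k => [|k IH]; first by rewrite expg0 perm1 expr0 mul1r addr0; case: v.
rewrite expgSr permM IH eta1E /=; congr (_, _); first by rewrite mulrSr addrA.
by rewrite exprS mulN1r mulNr.
Qed.

Lemma dvd_mn p q : (p.+2 %| q.+2 %/ 2)%N -> (2 %| q.+2)%N -> (p.+2 %| q.+2)%N.
Proof. by move=> hd he; rewrite -(divnK he); apply: dvdn_mulr. Qed.

Lemma e1n p q : (2 %| q.+2)%N -> ((e1 p q) ^+ q.+2 = 1)%g.
Proof.
move=> he; apply/permP => v; rewrite e1X perm1 (@natr0_Zp q q.+2) // addr0.
have ho : odd q.+2 = false by apply/negbTE; rewrite -dvdn2.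
by rewrite -signr_odd ho expr0 mul1r; case: v.
Qed.

Lemma e2sq p q : (p.+2 %| q.+2 %/ 2)%N -> (2 %| q.+2)%N ->
  ((e2 p q) ^+ 2 = Tp 0%R (-1)%R)%g.
Proof.
move=> hd he; apply/permP => v; rewrite expgS expg1 permM !eta2E TpE /= ggN //.
by rewrite opprK; congr (_, _); ring.
Qed.

Lemma ggS' p q (y : 'I_q.+2) : (p.+2 %| q.+2 %/ 2)%N -> (2 %| q.+2)%N ->
  gg p (y + 1) = iota p y - gg p y.
Proof.
move=> hd he; have := @ggS p q y hd he.
rewrite (iotaD _ _ (dvd_mn hd he)) iota1 addrK => <-; ring.
Qed.

Lemma natr_pred q : ((q.+1)%:R : 'I_q.+2) = -1.
Proof.
apply/eqP; rewrite -addr_eq0 -[1]/(1%:R) -natrD addn1.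
by rewrite (@natr0_Zp q q.+2).
Qed.
Lemma e2e1 p q : (p.+2 %| q.+2 %/ 2)%N -> (2 %| q.+2)%N ->
  (e2 p q * e1 p q = e1 p q ^+ q.+1 * e2 p q * Tp 0%R 1%R)%g.
Proof.
move=> hd he; apply/permP => v; rewrite !permM e1X eta1E !eta2E TpE /=.
rewrite natr_pred.
have ho : odd q.+1 by move: he; rewrite dvdn2 /=; case: (odd q).
rewrite -signr_odd ho expr1.
have [y ->] : exists y : 'I_q.+2, v.1 = y + 1 by exists (v.1 - 1); rewrite subrK.
rewrite addrK ggS' // (iotaN _ (dvd_mn hd he)) mul1r add0r opprD subrK; congr (_, _).

ring.
Qed.

Lemma Te1 p q (a b : 'I_p.+2) : (p.+2 %| q.+2)%N ->
  (Tp (q := q) a b * e1 p q = e1 p q * Tp (b - a)%R (- b)%R)%g.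
Proof.
move=> h; apply/permP => v; rewrite !permM TpE !eta1E TpE /= (iotaD _ _ h) iota1.
congr (_, _); ring.
Qed.

Lemma Te2 p q (a b : 'I_p.+2) : (p.+2 %| q.+2)%N ->
  (Tp (q := q) a b * e2 p q = e2 p q * Tp (- a)%R b)%g.
Proof.
move=> h; apply/permP => v; rewrite !permM TpE !eta2E TpE /= (iotaN _ h).
congr (_, _); ring.
Qed.

Lemma e1T p q (c d : 'I_p.+2) : (p.+2 %| q.+2)%N ->
  exists c' d', (e1 p q * Tp c d = Tp c' d' * e1 p q)%g.
Proof.
move=> h; exists (- c - d)%R, (- d)%R; rewrite Te1 //; congr (_ * Tp _ _)%g; ring.
Qed.

Lemma e2T p q (c d : 'I_p.+2) : (p.+2 %| q.+2)%N ->
  exists c' d', (e2 p q * Tp c d = Tp c' d' * e2 p q)%g.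
Proof.
by move=> h; exists (- c)%R, d; rewrite Te2 // opprK.
Qed.

Lemma e1XT p q k (c d : 'I_p.+2) : (p.+2 %| q.+2)%N ->
  exists c' d', (e1 p q ^+ k * Tp c d = Tp c' d' * e1 p q ^+ k)%g.
Proof.
move=> h; elim: k c d => [|k IH] c d; first by exists c, d; rewrite expg0 mul1g mulg1.
have [c1 [d1 E1]] := IH c d; have [c2 [d2 E2]] := e1T c1 d1 h.
by exists c2, d2; rewrite expgS -mulgA E1 mulgA E2 -mulgA.
Qed.
Lemma NF p q k (e : bool) (c d : 'I_p.+2) : (p.+2 %| q.+2)%N ->
  exists c' d', (e1 p q ^+ k * e2 p q ^+ e * Tp c d = Tp c' d' * e1 p q ^+ k * e2 p q ^+ e)%g.
Proof.
move=> h; case: e.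
  have [c1 [d1 E1]] := e2T c d h; have [c2 [d2 E2]] := e1XT k c1 d1 h.
  by exists c2, d2; rewrite expg1 -mulgA E1 mulgA E2.
by have [c1 [d1 E1]] := e1XT k c d h; exists c1, d1; rewrite expg0 !mulg1.
Qed.

Definition Pf p q (a b : 'I_p.+2) k (e : bool) : {perm V p q} :=
  (Tp a b * e1 p q ^+ k * e2 p q ^+ e)%g.
Arguments Pf {p q}.

Definition Img p q (x : {perm V p q}) :=
  exists a b k e, x = @Pf p q a b k e.

Lemma Img_e1 p q x : (p.+2 %| q.+2 %/ 2)%N -> (2 %| q.+2)%N ->
  Img x -> Img (x * e1 p q)%g.
Proof.
move=> hd he [a [b [k [e ->]]]]; case: e.
  have [c [d E]] := NF (k + q.+1) true 0%R 1%R (dvd_mn hd he).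
  exists (a + c)%R, (b + d)%R, (k + q.+1)%N, true.
  rewrite /Pf -TpM expg1 -!mulgA e2e1 //.
  rewrite expg1 !expgD in E *; rewrite -!mulgA in E *; by rewrite E.
by exists a, b, k.+1, false; rewrite /Pf !expg0 !mulg1 expgSr mulgA.
Qed.

Lemma Img_e2 p q x : (p.+2 %| q.+2 %/ 2)%N -> (2 %| q.+2)%N ->
  Img x -> Img (x * e2 p q)%g.
Proof.
move=> hd he [a [b [k [e ->]]]]; case: e; last first.
  by exists a, b, k, true; rewrite /Pf expg0 mulg1 expg1.
have [c [d E]] := NF k false 0%R (-1)%R (dvd_mn hd he).
exists (a + c)%R, (b + d)%R, k, false.
rewrite /Pf -TpM expg1 -!mulgA (_ : e2 p q * e2 p q = e2 p q ^+ 2)%g; last by rewrite expgS expg1.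
rewrite e2sq //.
rewrite expg0 !mulg1 in E *; rewrite -?mulgA in E *; by rewrite E.
Qed.
Arguments Pf {p q}.
Local Notation H p q := (<<[set e1 p q; e2 p q]>>)%g.

Lemma Img_prod p q N (c : 'I_N -> {perm V p q}) :
  (p.+2 %| q.+2 %/ 2)%N -> (2 %| q.+2)%N ->
  (forall i, c i \in [set e1 p q; e2 p q]) -> Img (\prod_i c i)%g.
Proof.
move=> hd he; elim: N c => [|N IH] c hc.
  by rewrite big_ord0; exists 0%R, 0%R, 0%N, false; rewrite /Pf Tp0 !expg0 !mulg1.
rewrite big_ord_recr /=.
have := IH (fun i => c (widen_ord (leqnSn N) i)) (fun i => hc _).
move: (hc ord_max); rewrite !inE => /orP[] /eqP ->.
  exact: Img_e1.
exact: Img_e2.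
Qed.

Lemma H_Img p q x : (p.+2 %| q.+2 %/ 2)%N -> (2 %| q.+2)%N ->
  x \in H p q -> Img x.
Proof.
by move=> hd he /gen_prodgP [N [c hc ->]]; apply: Img_prod.
Qed.

Lemma e1H p q : e1 p q \in H p q.
Proof. by apply: mem_gen; rewrite !inE eqxx. Qed.
Lemma e2H p q : e2 p q \in H p q.
Proof. by apply: mem_gen; rewrite !inE eqxx orbT. Qed.

Lemma TH p q (a b : 'I_p.+2) : (p.+2 %| q.+2 %/ 2)%N -> (2 %| q.+2)%N ->
  @Tp p q a b \in H p q.
Proof.
move=> hd he; have h := dvd_mn hd he.
have T01 : @Tp p q 0%R 1%R \in H p q.
  have -> : @Tp p q 0%R 1%R = ((e2 p q ^+ 2) ^+ p.+1)%g.
    by rewrite e2sq // TpX mul0rn mulNrn natr_pred opprK.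
  by rewrite !groupX // e2H.
have T1m : @Tp p q 1%R (-1)%R \in H p q.
  have -> : @Tp p q 1%R (-1)%R = ((e1 p q)^-1 * (Tp 0%R 1%R * e1 p q))%g.
    by rewrite Te1 // mulKg subr0.
  by rewrite groupM ?groupV ?e1H // groupM ?e1H.
have T10 : @Tp p q 1%R 0%R \in H p q.
  have -> : @Tp p q 1%R 0%R = (Tp 1%R (-1)%R * Tp 0%R 1%R)%g.
    by rewrite TpM addr0 addNr.
  by rewrite groupM.
have -> : @Tp p q a b = (Tp 1%R 0%R ^+ a * Tp 0%R 1%R ^+ b)%g.
  by rewrite !TpX TpM !mul0rn addr0 add0r !natr_ord.
by rewrite groupM ?groupX.
Qed.

Lemma Pf1 p q (a b : 'I_p.+2) k (e : bool) (v : V p q) :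
  (@Pf p q a b k e v).1 = (if e then -1 else 1) * (v.1 + k%:R).
Proof.
rewrite /Pf; case: e; rewrite ?expg1 ?expg0 ?mulg1 !permM ?eta2E e1X TpE /=.
  by rewrite mulN1r.
by rewrite mul1r.
Qed.

Lemma one_neq_m1 q : (0 < q)%N -> (1 : 'I_q.+2) != -1.
Proof.
move=> q0; apply/eqP => h; have := congr1 val h; rewrite valN val1 modn_small; lia.
Qed.

Lemma Pf_inj p q (a b a' b' : 'I_p.+2) (k k' : 'I_q.+2) (e e' : bool) :
  (0 < q)%N -> @Pf p q a b k e = Pf a' b' k' e' -> [/\ a = a', b = b', k = k' & e = e'].
Proof.
move=> q0 E.
have E0 := congr1 (fun f : {perm V p q} => (f (0, 0)).1) E.
have E1 := congr1 (fun f : {perm V p q} => (f (1, 0)).1) E.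
rewrite /= !Pf1 /= !add0r !natr_ord in E0; rewrite /= !Pf1 /= !natr_ord in E1.
have ee : e = e'.
  move: E1; rewrite !mulrDr E0 !mulr1 => h; have h2 := addIr _ h.
  move: h2 (one_neq_m1 q0); clear E E0 h; case: e; case: e' => //.
    by move=> ->; rewrite eqxx.
  by move=> <-; rewrite eqxx.
subst e'.
have s2 : (if e then -1 else 1) * (if e then -1 else 1) = 1 :> 'I_q.+2.
  by case: (e); rewrite ?mulrNN mulr1.
have kk : k = k' by rewrite -[k]mul1r -s2 -mulrA E0 mulrA s2 mul1r.
subst k'.
move: E; rewrite /Pf => E0'; have E := mulIg _ _ _ (mulIg _ _ _ E0').
have A0 := congr1 (fun f : {perm V p q} => (f (0, 0)).2) E.
have A1 := congr1 (fun f : {perm V p q} => (f (1, 0)).2) E.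
rewrite /= !TpE /= iota0 !mulr0 !addr0 !add0r in A0.
rewrite /= !TpE /= iota1 !mulr1 !add0r A0 in A1.
by split => //; apply: (addrI a').
Qed.
Lemma e12 p q : (p.+2 %| q.+2 %/ 2)%N -> (2 %| q.+2)%N ->
  ((e1 p q * e2 p q) ^+ 2 = 1)%g.
Proof.
move=> hd he; apply/permP => v; rewrite expgS expg1 !permM !eta1E !eta2E /= perm1.
rewrite (_ : - (- (v.1 + 1) + 1) = v.1); last by ring.
rewrite (_ : - (v.1 + 1) + 1 = - v.1); last by ring.
rewrite ggN // ggS' //; case: v => i j /=; congr (_, _); ring.
Qed.


Lemma natr_eq0 p (k : nat) : (k%:R : 'I_p.+2) = 0 -> (p.+2 %| k)%N.
Proof. by move/(congr1 val); rewrite ZpE => h; apply/eqP. Qed.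

Definition Pd p q (x : 'I_p.+2 * 'I_p.+2 * 'I_q.+2 * bool) : {perm V p q} :=
  @Pf p q x.1.1.1 x.1.1.2 x.1.2 x.2.

Lemma cardH p q : (p.+2 %| q.+2 %/ 2)%N -> (2 %| q.+2)%N -> (0 < q)%N ->
  #|H p q| = (2 * p.+2 ^ 2 * q.+2)%N.
Proof.
move=> hd he q0.
have HE : H p q = [set @Pd p q x | x in setT].
  apply/setP => x; apply/idP/imsetP.
    move/(H_Img hd he) => [a [b [k [e ->]]]].
    exists (a, b, Ordinal (ltn_pmod k (isT : (0 < q.+2)%N)), e) => //.
    by rewrite /Pd /Pf /= expg_mod // e1n.
  move=> [y _ ->]; case: y => [[[a b] k] e]; rewrite /Pd /Pf /=.
  by rewrite !groupM ?groupX ?e1H ?e2H ?TH.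
rewrite HE card_imset; last first.
  move=> [[[a b] k] e] [[[a' b'] k'] e']; rewrite /Pd /= => h.
  by have [-> -> -> ->] := Pf_inj q0 h.
rewrite cardsT !card_prod !card_ord card_bool; lia.
Qed.

Lemma ord_e1 p q : (2 %| q.+2)%N -> #[e1 p q]%g = q.+2.
Proof.
move=> he; apply/eqP; rewrite eqn_dvd order_dvdn e1n //= eqxx /=.
have h := expg_order (e1 p q).
have := congr1 (fun f : {perm V p q} => (f (0, 0)).1) h.
by rewrite /= e1X perm1 /= add0r => /natr_eq0.
Qed.

Lemma ord_e2 p q : (p.+2 %| q.+2 %/ 2)%N -> (2 %| q.+2)%N -> (0 < q)%N ->
  #[e2 p q]%g = (2 * p.+2)%N.
Proof.
move=> hd he q0; apply/eqP; rewrite eqn_dvd order_dvdn.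
rewrite expgM e2sq // TpX mul0rn mulNrn (@natr0_Zp p p.+2) // oppr0 Tp0 eqxx /=.
set o := #[e2 p q]%g.
have h : (e2 p q ^+ (odd o + (o./2).*2) = 1)%g by rewrite odd_double_half expg_order.
rewrite expgD -mul2n expgM e2sq // TpX mul0rn in h.
case ho : (odd o) in h.
  have := congr1 (fun f : {perm V p q} => (f (1, 0)).1) h.
  rewrite /= permM TpE expg1 eta2E perm1 /= => /eqP.
  by rewrite eq_sym (negbTE (one_neq_m1 q0)).
rewrite expg0 mul1g in h.
have := congr1 (fun f : {perm V p q} => (f (1, 0)).2) h.
rewrite /= TpE perm1 /= iota1 mulr1 !add0r mulNrn => /eqP; rewrite oppr_eq0 => /eqP.
move/natr_eq0 => hd2.
by rewrite -(odd_double_half o) ho add0n -mul2n dvdn_pmul2l.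
Qed.

Lemma ord_e12 p q : (p.+2 %| q.+2 %/ 2)%N -> (2 %| q.+2)%N ->
  #[(e1 p q * e2 p q)]%g = 2.
Proof.
move=> hd he; have d : (#[(e1 p q * e2 p q)]%g %| 2)%N by rewrite order_dvdn e12.
have n1 : #[(e1 p q * e2 p q)]%g != 1%N.
  rewrite order_eq1; apply/eqP => h.
  have := congr1 (fun f : {perm V p q} => (f (0, 0)).1) h.
  rewrite /= permM eta1E eta2E perm1 /= add0r => /eqP.
  by rewrite oppr_eq0 oner_eq0.
have := dvdn_leq (isT : (0 < 2)%N) d; have := order_gt0 (e1 p q * e2 p q)%g.
move: n1; lia.
Qed.

Local Close Scope ring_scope.

Theorem lemma5p6 (m s n : nat) :
  odd m -> 3 <= m -> ~~ odd s -> 0 < s -> ~~ (4 %| s) -> n = s * m ->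
  [/\ #[eta1 n m]%g = n,
      #[eta2 n m]%g = 2 * m,
      #[(eta1 n m * eta2 n m)%g]%g = 2
    & #|<<[set eta1 n m; eta2 n m]>>%g| = 2 * m ^ 2 * n].
Proof.
move=> om m3 es s0 _ hn.
case: m om m3 hn => [|[|p]] // om m3 hn.
have [s' ss] : exists s', s = (2 * s')%N.
  by move: es; rewrite -dvdn2 => /dvdnP [k ->]; exists k; rewrite mulnC.
subst s.
case: n hn => [|[|q]] hn; try nia.
have hd : (p.+2 %| q.+2 %/ 2)%N by rewrite hn -mulnA mulKn // dvdn_mull.
have he : (2 %| q.+2)%N by rewrite hn -mulnA dvdn_mulr.
have q0 : (0 < q)%N by nia.
split.
- exact: ord_e1.
- exact: ord_e2.
- exact: ord_e12.
- exact: cardH.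
Qed.
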